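(* Every weak factorization structure is a factorization structure.
   Context: Let $\mathbb{F}=\mathbb{R}$ or $\mathbb{C}$, $V_1,\ldots,V_m$ ($m\ge2$) 2-dimensional $\mathbb{F}$-vector spaces, $V^*=V_1^*\otimes\cdots\otimes V_m^*$. For $\ell\in\mathbb{P}(V_j)$ (the set of 1-dimensional subspaces, with Zariski topology) let $\Sigma^0_{j,\ell}=V_1^*\otimes\cdots\otimes V_{j-1}^*\otimes\ell^0\otimes V_{j+1}^*\otimes\cdots\otimes V_m^*$, where $\ell^0\subset V_j^*$ is the annihilator of $\ell$. ''Generic $\ell$'' means all $\ell$ in some nonempty Zariski-open subset. A weak factorization structure of dimension $m$ is an injective linear map $\varphi:\mathfrak{h}\to V^*$ with $\dim\mathfrak{h}=m+1$ such that $\dim(\varphi(\mathfrak{h})\cap\Sigma^0_{j,\ell})\ge1$ for every $j$ and generic $\ell\in\mathbb{P}(V_j)$. A factorization structure is such a map with $\dim(\varphi(\mathfrak{h})\cap\Sigma^0_{j,\ell})=1$ for every $j$ and generic $\ell\in\mathbb{P}(V_j)$. *)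

(* Defs.v *)
From HB Require Import structures.
From mathcomp Require Import all_boot all_order all_algebra.
From mathcomp Require Import reals.
From mathcomp Require Import complex.
Set Implicit Arguments. Unset Strict Implicit. Unset Printing Implicit Defensive.
Import Order.TTheory GRing.Theory Num.Theory.
Local Open Scope ring_scope.

(* V_j = F^2 = 'rV[F]_2 ; V_j^* = 'rV[F]_2 with the pairing below.
   V^* = V_1^* (x) ... (x) V_m^* = functions on multi-indices 'I_m -> 'I_2. *)
Definition tidx (m : nat) := {ffun 'I_m -> 'I_2}.
Definition tens (F : fieldType) (m : nat) := {ffun tidx m -> F^o}.

Definition pairing (F : fieldType) (a v : 'rV[F]_2) : F :=
  \sum_(k < 2) a 0 k * v 0 k.

Definition ptensor (F : fieldType) (m : nat) (a : 'I_m -> 'rV[F]_2) : tens F m :=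
  [ffun i : tidx m => \prod_(k < m) a k 0 (i k)].

Definition tensor_span (F : fieldType) (m : nat)
    (U : 'I_m -> {vspace 'rV[F]_2}) : {vspace tens F m} :=
  <<[seq ptensor (fun k => (vbasis (U k))`_(f k)) | f : tidx m]>>%VS.

Definition annih (F : fieldType) (v : 'rV[F]_2) : {vspace 'rV[F]_2} :=
  lker (linfun (fun a : 'rV[F]_2 => (pairing a v : F^o))).

Definition Sigma0 (F : fieldType) (m : nat) (j : 'I_m) (v : 'rV[F]_2)
    : {vspace tens F m} :=
  tensor_span (fun k => if k == j then annih v else fullv).

(* "P holds for generic l in P(V_j)": P holds on a nonempty Zariski-open
   subset of P^1, i.e. on all lines [v] outside the zero set of some nonzero
   binary form  sum_k p_k x^k y^(d-k)  (the basic open sets of P^1). *)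
Definition generic (F : fieldType) (P : 'rV[F]_2 -> Prop) : Prop :=
  exists (d : nat) (p : {poly F}),
    [/\ p != 0, (size p <= d.+1)%N &
      forall v : 'rV[F]_2, v != 0 ->
        \sum_(k < d.+1) p`_k * v 0 0 ^+ k * v 0 1 ^+ (d - k) != 0 -> P v].

Definition weak_factorization_structure (F : fieldType) (m : nat)
    (hT : vectType F) (phi : 'Hom(hT, tens F m)) : Prop :=
  [/\ \dim (fullv : {vspace hT}) = m.+1,
      lker phi = 0%VS &
      forall j : 'I_m,
        generic (fun v => (1 <= \dim (limg phi :&: Sigma0 j v))%N)].

Definition factorization_structure (F : fieldType) (m : nat)
    (hT : vectType F) (phi : 'Hom(hT, tens F m)) : Prop :=
  [/\ \dim (fullv : {vspace hT}) = m.+1,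
      lker phi = 0%VS &
      forall j : 'I_m,
        generic (fun v => \dim (limg phi :&: Sigma0 j v) = 1%N)].

(* Main.v *)
Require Import Defs.
From HB Require Import structures.
From mathcomp Require Import all_boot all_order all_algebra.
From mathcomp Require Import reals.
From mathcomp Require Import complex.
From Stdlib Require Import Classical.
From mathcomp Require Import ring zify.
Set Implicit Arguments. Unset Strict Implicit. Unset Printing Implicit Defensive.
Import Order.TTheory GRing.Theory Num.Theory.
Local Open Scope ring_scope.

Section S.
Variable F : numFieldType.
Variable m : nat.

Definition upd (i : tidx m) (j : 'I_m) (k : 'I_2) : tidx m :=
  [ffun l => if l == j then k else i l].

Definition Cvf (j : 'I_m) (v : 'rV[F]_2) (f : tens F m) : tens F m :=
  [ffun i => \sum_(k < 2) v 0 k *: f (upd i j k)].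

Fact Cvf_linear j v : linear (Cvf j v).
Proof.
move=> a f g; apply/ffunP => i; rewrite !ffunE scaler_sumr -big_split /=.
by apply: eq_bigr => k _; rewrite !ffunE scalerDr !scalerA mulrC.
Qed.

HB.instance Definition _ j v := GRing.isLinear.Build F (tens F m) (tens F m) _ (Cvf j v) (Cvf_linear j v).

Definition Chv j v : 'End(tens F m) := linfun (Cvf j v).

Lemma ChvE j v f : Chv j v f = Cvf j v f.
Proof. by rewrite lfunE. Qed.

Lemma sum2 (V : nmodType) (G : 'I_2 -> V) : \sum_(k < 2) G k = G ord0 + G ord_max.
Proof. rewrite big_ord_recr big_ord1; congr (G _ + _); exact: val_inj. Qed.

Lemma updE i j k l : upd i j k l = if l == j then k else i l.
Proof. by rewrite ffunE. Qed.

Lemma upd_same i j : upd i j (i j) = i.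
Proof. by apply/ffunP => l; rewrite updE; case: eqP => [->|]. Qed.

Lemma upd_upd i j k k' : upd (upd i j k) j k' = upd i j k'.
Proof. by apply/ffunP => l; rewrite !updE; case: eqP. Qed.

Lemma upd_comm i j j' k k' : j != j' ->
  upd (upd i j k) j' k' = upd (upd i j' k') j k.
Proof.
move=> jj; apply/ffunP => l; rewrite !updE.
case: (eqVneq l j') => [->|lj']; [by rewrite eq_sym (negbTE jj) | by []].
Qed.

Lemma Cvf_comm j j' v w f : j != j' ->
  Cvf j v (Cvf j' w f) = Cvf j' w (Cvf j v f).
Proof.
move=> jj; apply/ffunP => i; rewrite !ffunE.
under eq_bigr => k _ do rewrite ffunE scaler_sumr.
under [RHS]eq_bigr => k _ do rewrite ffunE scaler_sumr.
rewrite exchange_big /=; apply: eq_bigr => k' _; apply: eq_bigr => k _.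
by rewrite !scalerA mulrC upd_comm.
Qed.

Definition vc (c : F) : 'rV[F]_2 := \row_(k < 2) (if k == ord0 then c else 1).

Lemma Cvf_vc j c f i :
  Cvf j (vc c) f i = c * f (upd i j ord0) + f (upd i j ord_max).
Proof. by rewrite ffunE sum2 !mxE /= scale1r. Qed.

Lemma Cvf_indep j c c' f : c != c' -> Cvf j (vc c) f = 0 ->
  Cvf j (vc c') f = 0 -> f = 0.
Proof.
move=> cc H1 H2; apply/ffunP => i.
have a1 := congr1 (fun g : tens F m => g i) H1; have a2 := congr1 (fun g : tens F m => g i) H2.
rewrite /= Cvf_vc ffunE in a1; rewrite /= Cvf_vc ffunE in a2.
move/eqP: a1 => a1; move/eqP: a2 => a2.
have e0 : f (upd i j ord0) = 0.
  have : (c - c') * f (upd i j ord0) = (c * f (upd i j ord0) + f (upd i j ord_max))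
     - (c' * f (upd i j ord0) + f (upd i j ord_max)) by ring.
  rewrite (eqP a1) (eqP a2) subrr => /eqP.
  by rewrite mulf_eq0 subr_eq0 (negbTE cc) => /eqP.
have e1 : f (upd i j ord_max) = 0.
  by move: a1; rewrite e0 mulr0 add0r => /eqP.
rewrite -(upd_same i j) ffunE; case: (i j) => [[|[|k]] Hk] //.
  by rewrite -e0; congr (f (upd _ _ _)); exact: val_inj.
by rewrite -e1; congr (f (upd _ _ _)); exact: val_inj.
Qed.

Lemma Cvf_scale j (v : 'rV[F]_2) f : v 0 ord_max != 0 ->
  Cvf j v f = v 0 ord_max *: Cvf j (vc (v 0 ord0 / v 0 ord_max)) f.
Proof.
move=> v1; apply/ffunP => i; rewrite [LHS]ffunE sum2 [RHS]ffunE Cvf_vc.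
rewrite scalerDr scalerA mulrC divfK // scaler1.
Qed.


Definition pairf (v : 'rV[F]_2) (a : 'rV[F]_2) : F^o := pairing a v.

Fact pairf_linear v : linear (pairf v).
Proof.
move=> c a b; rewrite /pairf /pairing scaler_sumr -big_split /=.
by apply: eq_bigr => k _; rewrite !mxE /GRing.scale /= mulrDl mulrA.
Qed.

HB.instance Definition _ v := GRing.isLinear.Build F 'rV[F]_2 F^o _ (pairf v) (pairf_linear v).

Lemma annihP (v a : 'rV[F]_2) : a \in annih v -> pairing a v = 0.
Proof.
have -> : annih v = lker (linfun (pairf v)) by [].
by rewrite memv_ker lfunE /= => /eqP.
Qed.

Lemma Sigma0_sub j (v : 'rV[F]_2) : (Sigma0 j v <= lker (Chv j v))%VS.
Proof.
apply/span_subvP => x /mapP [g _ ->].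
set a := (fun k => _).
have aj : pairing (a j) v = 0.
  apply: annihP; rewrite /a eqxx.
  case: (ltnP (g j) (size (vbasis (annih v)))) => H.
    by apply: vbasis_mem; apply: mem_nth.
  by rewrite nth_default // mem0v.
rewrite memv_ker ChvE; apply/eqP/ffunP => i; rewrite !ffunE.
have R_eq : forall k, \prod_(l < m | l != j) a l 0 (upd i j k l)
   = \prod_(l < m | l != j) a l 0 (i l).
  by move=> k; apply: eq_bigr => l /negbTE lj; rewrite updE lj.
under eq_bigr => k _ do rewrite ffunE (bigD1 j) //= updE eqxx R_eq.
move: aj; rewrite /pairing => aj.
transitivity ((\prod_(l < m | l != j) a l 0 (i l)) * \sum_(k < 2) a j 0 k * v 0 k).
  rewrite mulr_sumr; apply: eq_bigr => k _.
  by rewrite /GRing.scale /=; ring.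
by rewrite aj mulr0.
Qed.


Definition inf (P : F -> Prop) := forall s : seq F, exists c, c \notin s /\ P c.
Definition Ch j c : 'End(tens F m) := Chv j (vc c).
Definition good (W : {vspace tens F m}) j d := (W :&: lker (Ch j d) != 0)%VS.

Lemma fin_bad (I : eqType) (r : seq I) (P : I -> F -> Prop) :
  (forall i, i \in r -> exists s : seq F, forall c, c \notin s -> P i c) ->
  exists s : seq F, forall c, c \notin s -> forall i, i \in r -> P i c.
Proof.
elim: r => [|i r IH] H; first by exists (Nil F).
have [s1 H1] := H i (mem_head _ _).
have [s2 H2] : exists s2 : seq F, forall c, c \notin s2 -> forall i, i \in r -> P i c.
  by apply: IH => i' ir; apply: H; rewrite in_cons ir orbT.
exists (s1 ++ s2) => c; rewrite mem_cat negb_or => /andP [c1 c2] i'.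
by rewrite in_cons => /orP [/eqP ->|]; [apply: H1 | apply: H2].
Qed.

Lemma at_most_one (P : F -> Prop) :
  (forall c c', c != c' -> P c -> P c' -> False) ->
  exists s : seq F, forall c, c \notin s -> ~ P c.
Proof.
move=> H; case: (classic (exists c, P c)) => [[c0 Pc0]|nP].
  exists [:: c0] => c; rewrite inE => cc Pc; exact: (H _ _ cc Pc Pc0).
by exists (Nil F) => c _ Pc; apply: nP; exists c.
Qed.

Lemma not_inf Q : ~ inf Q -> exists s : seq F, forall d, d \notin s -> ~ Q d.
Proof.
move=> Hn; apply: NNPP => H; apply: Hn => s; apply: NNPP => H2; apply: H.
by exists s => d dn Qd; apply: H2; exists d.
Qed.

Lemma ChE j c f : Ch j c f = Cvf j (vc c) f.
Proof. exact: ChvE. Qed.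

Lemma ker_indep j c c' x : c != c' -> x \in lker (Ch j c) -> x \in lker (Ch j c') -> x = 0.
Proof.
by rewrite !memv_ker !ChE => cc /eqP H1 /eqP H2; apply: (Cvf_indep cc H1 H2).
Qed.

Lemma pick_nz (U : {vspace tens F m}) : U != 0%VS -> exists2 x, x \in U & x != 0.
Proof. by move=> U0; exists (vpick U); [exact: memv_pick | rewrite vpick0]. Qed.

Lemma step (W : {vspace tens F m}) j (T' : seq 'I_m) (P : F -> Prop) :
  W != 0%VS -> j \notin T' -> (forall j', j' \in T' -> inf (good W j')) -> inf P ->
  exists c, [/\ P c, (Ch j c @: W)%VS != 0%VS &
     forall j', j' \in T' -> inf (good (Ch j c @: W) j')].
Proof.
move=> W0 jT HT HP.
have [s0 H0] : exists s0 : seq F, forall c, c \notin s0 -> (Ch j c @: W)%VS != 0%VS.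
  have /at_most_one [s0 H0] : forall c c', c != c' -> (Ch j c @: W)%VS == 0%VS ->
      (Ch j c' @: W)%VS == 0%VS -> False.
    move=> c c' cc; rewrite -!lkerE => /subvP S1 /subvP S2.
    have [x xW x0] := pick_nz W0.
    by move/eqP: x0; apply; apply: (ker_indep cc (S1 _ xW) (S2 _ xW)).
  by exists s0 => c /H0 /negP.
have [s1 H1] : exists s1 : seq F, forall c, c \notin s1 ->
    forall j', j' \in T' -> inf (good (Ch j c @: W) j').
  apply: fin_bad => j' j'T.
  have jj : j' != j by apply: contraNneq jT => <-.
  have /at_most_one [s H] : forall c c', c != c' -> ~ inf (good (Ch j c @: W) j') ->
      ~ inf (good (Ch j c' @: W) j') -> False.
    move=> c c' cc /not_inf [sc Hc] /not_inf [sc' Hc'].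
    have [d [dn gd]] := HT j' j'T (sc ++ sc').
    move: dn; rewrite mem_cat negb_or => /andP [dc dc'].
    have [x xI x0] := pick_nz gd.
    move: xI; rewrite memv_cap => /andP [xW xk].
    have key : forall c1, ~ good (Ch j c1 @: W) j' d -> x \in lker (Ch j c1).
      move=> c1 ng; have : (Ch j c1 @: W :&: lker (Ch j' d) == 0)%VS.
        by apply/negPn/negP.
      move/eqP => E; rewrite memv_ker; rewrite -memv0 -E memv_cap memv_img //=.
      rewrite memv_ker !ChE Cvf_comm //.
      by move: xk; rewrite memv_ker ChE => /eqP ->; rewrite -ChE linear0.
    by move/eqP: x0; apply; apply: (ker_indep cc (key _ (Hc _ dc)) (key _ (Hc' _ dc'))).
  by exists s => c /H; apply: NNPP.
have [c [cn Pc]] := HP (s0 ++ s1).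
move: cn; rewrite mem_cat negb_or => /andP [c0 c1].
by exists c; split => //; [apply: H0 | apply: H1].
Qed.


Lemma L n : forall (W : {vspace tens F m}) (T : seq 'I_m), uniq T -> size T = n ->
  W != 0%VS -> (forall j, j \in T -> inf (good W j)) -> (n < \dim W)%N.
Proof.
elim: n => [|n IH] W T uT sT W0 HT.
  by rewrite lt0n dimv_eq0.
case: T uT sT HT => [//|j T'] /= /andP [jT uT'] [sT'] HT.
have HT' : forall j', j' \in T' -> inf (good W j').
  by move=> j' j'T; apply: HT; rewrite in_cons j'T orbT.
have [c [gc W'0 HW']] := step W0 jT HT' (HT j (mem_head _ _)).
have := IH _ _ uT' sT' W'0 HW'.
have E := limg_ker_dim (Ch j c) W.
have : (0 < \dim (W :&: lker (Ch j c)))%N by rewrite lt0n dimv_eq0.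
move=> a b; rewrite -E; exact: (leq_add a b).
Qed.

Lemma core (W : {vspace tens F m}) j : \dim W = m.+1 ->
  (forall j', inf (good W j')) ->
  exists s : seq F, forall c, c \notin s -> (\dim (W :&: lker (Ch j c)) <= 1)%N.
Proof.
move=> dW HW; apply: NNPP => Hn.
have Hinf : inf (fun c => (1 < \dim (W :&: lker (Ch j c)))%N).
  move=> s; apply: NNPP => H; apply: Hn; exists s => c cs; apply: NNPP => H2.
  by apply: H; exists c; split => //; rewrite ltnNge; apply/negP.
have W0 : W != 0%VS by rewrite -dimv_eq0 dW.
set T' := [seq j' <- enum 'I_m | j' != j].
have jT : j \notin T' by rewrite mem_filter eqxx.
have [c [Pc W'0 HW']] := step W0 jT (fun j' _ => HW j') Hinf.
have uT' : uniq T' by rewrite filter_uniq // enum_uniq.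
have := L uT' (erefl _) W'0 HW'.
have sT : size T' = m.-1.
  have H := count_predC (fun j' : 'I_m => j' != j) (enum 'I_m).
  have H1 : count (predC (fun j' : 'I_m => j' != j)) (enum 'I_m) = 1%N.
    rewrite (@eq_count _ _ (pred1 j)) ?count_uniq_mem ?enum_uniq ?mem_enum //.
    by move=> x /=; rewrite negbK.
  move: H; rewrite H1 size_enum_ord addn1 => E.
  by rewrite size_filter -[in RHS]E.
have E := limg_ker_dim (Ch j c) W.
move: Pc; rewrite sT -subn1 => a b; have := leq_add a b; rewrite E dW; lia.
Qed.


Lemma inf_nonroot (p : {poly F}) : p != 0 -> inf (fun c => p.[c] != 0).
Proof.
move=> p0 s.
set q := p * \prod_(x <- s) ('X - x%:P).
have q0 : q != 0.
  by rewrite mulf_neq0 // prodf_seq_neq0; apply/allP => x _; rewrite polyXsubC_eq0.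
set r := [seq (i%:R : F) | i <- iota 0 (size q)].
have ur : uniq r.
  by rewrite map_inj_uniq ?iota_uniq // => i k /eqP; rewrite eqr_nat => /eqP.
have : ~~ all (root q) r.
  apply/negP => A; have := max_poly_roots q0 A ur.
  by rewrite size_map size_iota ltnn.
case/allPn => x _; rewrite /root hornerM horner_prod mulf_eq0 negb_or => /andP [px ps].
exists x; split => //; apply: contra ps => xs.
by rewrite prodf_seq_eq0; apply/hasP; exists x => //; rewrite hornerXsubC subrr eqxx.
Qed.

Definition form d (p : {poly F}) (v : 'rV[F]_2) :=
  \sum_(k < d.+1) p`_k * v 0 ord0 ^+ k * v 0 ord_max ^+ (d - k).

Lemma formE d (p : {poly F}) (v : 'rV[F]_2) : v 0 ord_max != 0 -> (size p <= d.+1)%N ->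
  form d p v = v 0 ord_max ^+ d * p.[v 0 ord0 / v 0 ord_max].
Proof.
move=> v1 sp; rewrite (horner_coef_wide _ sp) mulr_sumr /form; apply: eq_bigr => k _.
set c := v 0 ord0 / v 0 ord_max.
have -> : v 0 ord0 = c * v 0 ord_max by rewrite /c divfK.
have -> : v 0 ord_max ^+ d = v 0 ord_max ^+ k * v 0 ord_max ^+ (d - k).
  by rewrite -exprD subnKC // -ltnS ltn_ord.
rewrite exprMn; ring.
Qed.

Lemma form_v1 d (p : {poly F}) (v : 'rV[F]_2) : (size p <= d)%N -> form d p v != 0 -> v 0 ord_max != 0.
Proof.
move=> sp; apply: contraNneq => v1; rewrite /form big1 // => k _.
case: (ltnP k d) => kd.
  by rewrite v1 expr0n subn_eq0 leqNgt kd /= mulr0.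
by rewrite nth_default ?mul0r ?mulr0 //; exact: leq_trans sp kd.
Qed.


Lemma vcn c : vc c != 0.
Proof.
apply/eqP => /matrixP /(_ 0 ord_max); rewrite !mxE /= => /eqP.
by rewrite oner_eq0.
Qed.

Lemma formvc d (p : {poly F}) (c : F) : (size p <= d.+1)%N -> form d p (vc c) = p.[c].
Proof.
move=> sp; rewrite formE ?mxE //= ?oner_eq0 //.
by rewrite expr1n mul1r divr1.
Qed.

Lemma e1 : (1 : 'I_2) = ord_max. Proof. exact: val_inj. Qed.

Lemma main (hT : vectType F) (phi : 'Hom(hT, tens F m)) :
  weak_factorization_structure phi -> factorization_structure phi.
Proof.
case=> dh k0 Hg; split => // j.
set W := limg phi.
have dW : \dim W = m.+1 by rewrite /W limg_dim_eq ?dh // k0 capv0.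
have Hinf : forall j', inf (good W j').
  move=> j'; have [d [p [p0 sp Hp]]] := Hg j'.
  move=> s; have [c [cs pc]] := inf_nonroot p0 s; exists c; split => //.
  have H := Hp (vc c) (vcn c).
  rewrite e1 -/(form d p (vc c)) formvc // in H.
  have {}H := H pc.
  rewrite /good -dimv_eq0 -lt0n; apply: leq_trans H _; apply: dimvS.
  by apply: capvS => //; exact: Sigma0_sub.
have [s Hs] := core j dW Hinf.
have [d [p [p0 sp Hp]]] := Hg j.
set q := p * \prod_(x <- s) ('X - x%:P).
have q0 : q != 0.
  by rewrite mulf_neq0 // prodf_seq_neq0; apply/allP => x _; rewrite polyXsubC_eq0.
exists (size q), q; split => // v v0 fq.
rewrite e1 -/(form _ q v) in fq.
have v1 : v 0 ord_max != 0 := form_v1 (leqnn _) fq.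
move: fq; rewrite (formE v1 (leqnSn _)) mulf_eq0 negb_or => /andP [_ qc].
set c := v 0 ord0 / v 0 ord_max in qc.
move: qc; rewrite hornerM mulf_eq0 negb_or horner_prod => /andP [pc ps].
have cs : c \notin s.
  apply: contra ps => cs; rewrite prodf_seq_eq0; apply/hasP; exists c => //.
  by rewrite hornerXsubC subrr eqxx.
apply/eqP; rewrite eqn_leq; apply/andP; split.
  apply: leq_trans (Hs c cs); apply: dimvS; apply: capvS => //.
  apply: subv_trans (Sigma0_sub j v) _; apply/subvP => x.
  by rewrite !memv_ker ChE ChvE (Cvf_scale _ _ v1) scaler_eq0 (negbTE v1).
apply: Hp => //; rewrite e1 -/(form _ p v) (formE v1 sp).
by rewrite mulf_neq0 // expf_neq0.
Qed.

End S.

Theorem theorem2p21 :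
  forall m : nat, (2 <= m)%N ->
  (forall (R : realType) (hT : vectType R) (phi : 'Hom(hT, tens R m)),
     weak_factorization_structure phi -> factorization_structure phi) /\
  (forall (R : realType) (hT : vectType R[i]) (phi : 'Hom(hT, tens R[i] m)),
     weak_factorization_structure phi -> factorization_structure phi).
Proof.
move=> m _; split => R hT phi.
  exact: (@main R m hT phi).
exact: (@main R[i] m hT phi).
Qed.
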